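(* Let $S$ be a modal left $E$-monoid. Then $S$ is an inductive left $E$-monoid if and only if for all $e,f\in E$ there exists $g\in E$ with $(e\cdot f)e\sim_r g$; in that case $e\wedge f=g$ (the meet in $(E,\le_r)$), and moreover $e\wedge f=e\wedge(e\cdot f)$ for all $e,f\in E$. If $S$ is an inductive left $E$-monoid and $E$ is right reduced, then $e\wedge f=(e\cdot f)e$ for all $e,f\in E$.
   Context: For a semigroup $S$, $E(S)$ is its set of idempotents; for $e,f\in E(S)$, $e\le_r f$ iff $e=ef$, and $e\sim_r f$ iff $e\le_r f$ and $f\le_r e$. $E\subseteq E(S)$ is right pre-reduced if $e=ef$ and $f=fe$ imply $e=f$ for $e,f\in E$; it is right reduced if for all $e,f\in E$, $e=ef$ implies $e=fe$. Let $S$ be a monoid and $1\in E\subseteq E(S)$. $S$ is a modal left $E$-monoid if $E$ is right pre-reduced and (I1') for all $t\in S$, $e\in E$ there is $t\cdot e\in E$ such that for all $s\in S$: $ste=st$ iff $s(t\cdot e)=s$; the (necessarily unique) map $(t,e)\mapsto t\cdot e$ is the left $E$-modal operation. $S$ is an inductive left $E$-monoid if it is a modal left $E$-monoid, $(E,\le_r)$ is a meet-semilattice with meet $\wedge$, and (I2') for $s\in S$, $e,f\in E$: $se=sf=s$ implies $s(e\wedge f)=s$. *)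

(* Defs.v *)
Record Monoid := {
  carrier :> Type;
  mul : carrier -> carrier -> carrier;
  one : carrier;
  mulA : forall a b c, mul a (mul b c) = mul (mul a b) c;
  mul1s : forall a, mul one a = a;
  muls1 : forall a, mul a one = a
}.

Arguments mul {m}.
Arguments one {m}.

Section Defs.
Variable S : Monoid.
Local Notation "a * b" := (mul a b).

Definition idempotent (e : S) : Prop := e * e = e.

Definition le_r (e f : S) : Prop := e = e * f.
Definition sim_r (e f : S) : Prop := le_r e f /\ le_r f e.

Definition right_pre_reduced (E : S -> Prop) : Prop :=
  forall e f, E e -> E f -> e = e * f -> f = f * e -> e = f.

Definition right_reduced (E : S -> Prop) : Prop :=
  forall e f, E e -> E f -> e = e * f -> e = f * e.

Definition left_modal_op (E : S -> Prop) (dot : S -> S -> S) : Prop :=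
  forall t e, E e ->
    E (dot t e) /\ (forall s, s * t * e = s * t <-> s * dot t e = s).

(* S is a modal left E-monoid, with left E-modal operation dot
   (this operation is necessarily unique). *)
Definition modal_left_E_monoid (E : S -> Prop) (dot : S -> S -> S) : Prop :=
  E one /\ (forall e, E e -> idempotent e) /\ right_pre_reduced E
  /\ left_modal_op E dot.

Definition is_meet (E : S -> Prop) (e f m : S) : Prop :=
  E m /\ le_r m e /\ le_r m f /\
  (forall h, E h -> le_r h e -> le_r h f -> le_r h m).

Definition inductive_with (E : S -> Prop) (dot meet : S -> S -> S) : Prop :=
  modal_left_E_monoid E dot
  /\ (forall e f, E e -> E f -> is_meet E e f (meet e f))
  /\ (forall s e f, E e -> E f -> s * e = s -> s * f = s -> s * meet e f = s).

Definition inductive_left_E_monoid (E : S -> Prop) (dot : S -> S -> S) : Prop :=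
  exists meet, inductive_with E dot meet.

End Defs.

(* Main.v *)
Require Import Defs.
From Stdlib Require Import ClassicalEpsilon.

Section H.
Variable S : Monoid.
Variable E : S -> Prop.
Variable dot : S -> S -> S.
Hypothesis Hmod : modal_left_E_monoid S E dot.
Local Notation "a * b" := (mul a b).

Lemma idem e : E e -> e * e = e.
Proof. destruct Hmod as [_ [H _]]. intro; apply H; auto. Qed.
Lemma EE t e : E e -> E (dot t e).
Proof. destruct Hmod as [_ [_ [_ H]]]. intro He; apply (H t e He). Qed.
Lemma modal t e s : E e -> (s * t * e = s * t <-> s * dot t e = s).
Proof. destruct Hmod as [_ [_ [_ H]]]. intro He; apply (H t e He). Qed.
Lemma prered e f : E e -> E f -> e = e * f -> f = f * e -> e = f.
Proof. destruct Hmod as [_ [_ [H _]]]. apply H. Qed.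

Lemma lb1 e f h : E f -> h = h * e -> h = h * f -> h = h * dot e f.
Proof. intros Hf H1 H2. symmetry. apply (modal e f h Hf).
  rewrite <- H1. symmetry; exact H2. Qed.
Lemma lb2 e f h : E f -> h = h * e -> h = h * dot e f -> h = h * f.
Proof. intros Hf H1 H2. pose proof (proj2 (modal e f h Hf) (eq_sym H2)) as H.
  rewrite <- H1 in H. symmetry; exact H. Qed.

Lemma x_le_e e f : E e -> (dot e f * e) * e = dot e f * e.
Proof. intro He. rewrite <- mulA, idem; auto. Qed.
Lemma x_le_f e f : E f -> (dot e f * e) * f = dot e f * e.
Proof. intro Hf. apply (modal e f (dot e f) Hf). apply idem, EE, Hf. Qed.

Lemma I2x e f s : E e -> E f -> s * e = s -> s * f = s -> s * (dot e f * e) = s.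
Proof. intros He Hf H1 H2. rewrite mulA.
  assert (s * dot e f = s) as ->. { apply (modal e f s Hf). rewrite H1. exact H2. }
  exact H1. Qed.
End H.

Theorem proposition5p7 (S : Monoid) (E : S -> Prop) (dot : S -> S -> S)
  (Hmod : modal_left_E_monoid S E dot) :
  (inductive_left_E_monoid S E dot <->
     (forall e f, E e -> E f ->
        exists g, E g /\ sim_r S (mul (dot e f) e) g))
  /\ (forall meet, inductive_with S E dot meet ->
        (forall e f g, E e -> E f -> E g ->
            sim_r S (mul (dot e f) e) g -> meet e f = g)
        /\ (forall e f, E e -> E f -> meet e f = meet e (dot e f))
        /\ (right_reduced S E ->
              forall e f, E e -> E f -> meet e f = mul (dot e f) e)).
Proof.
  unfold sim_r, le_r.
  assert (Hsim : forall meet, inductive_with S E dot meet -> forall e f, E e -> E f ->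
     mul (dot e f) e = mul (mul (dot e f) e) (meet e f) /\
     meet e f = mul (meet e f) (mul (dot e f) e)).
  { intros meet [_ [Hm HI]] e f He Hf.
    destruct (Hm e f He Hf) as [Eg [g1 [g2 _]]]. split.
    - symmetry. apply HI; auto. apply (x_le_e S E dot Hmod); auto. apply (x_le_f S E dot Hmod); auto.
    - rewrite mulA. rewrite <- (lb1 S E dot Hmod e f (meet e f) Hf g1 g2). exact g1. }
  split; [split|].
  - intros [meet Hi] e f He Hf. exists (meet e f). split.
    + destruct Hi as [_ [Hm _]]. apply (Hm e f He Hf).
    + destruct (Hsim meet Hi e f He Hf); auto.
  - intros Hex.
    exists (fun e f => epsilon (inhabits (one (m:=S)))
              (fun g => E g /\ mul (dot e f) e = mul (mul (dot e f) e) g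
                          /\ g = mul g (mul (dot e f) e))).
    set (meet := fun e f => _).
    assert (Hsp : forall e f, E e -> E f -> E (meet e f) /\
       mul (dot e f) e = mul (mul (dot e f) e) (meet e f) /\
       meet e f = mul (meet e f) (mul (dot e f) e)).
    { intros e f He Hf. unfold meet. apply epsilon_spec.
      destruct (Hex e f He Hf) as [g [Hg [A B]]]. exists g; auto. }
    split; [exact Hmod|split].
    + intros e f He Hf. destruct (Hsp e f He Hf) as [Eg [A B]].
      set (g := meet e f) in *. set (x := mul (dot e f) e) in *.
      split; [exact Eg|split;[|split]].
      * change (g = mul g e).
        assert (Hge : mul g (mul x e) = mul g x) by (unfold x; rewrite (x_le_e S E dot Hmod e f He); reflexivity).
        rewrite mulA, <- B in Hge. symmetry; exact Hge.
      * change (g = mul g f).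
        assert (Hge : mul g (mul x f) = mul g x) by (unfold x; rewrite (x_le_f S E dot Hmod e f Hf); reflexivity).
        rewrite mulA, <- B in Hge. symmetry; exact Hge.
      * intros h Eh h1 h2. pose proof (lb1 S E dot Hmod e f h Hf h1 h2) as h3.
        assert (hx : h = mul h x). { unfold x. rewrite mulA, <- h3. exact h1. }
        change (h = mul h g). rewrite hx at 2. rewrite <- mulA, <- A. exact hx.
    + intros s e f He Hf H1 H2. destruct (Hsp e f He Hf) as [Eg [A B]].
      pose proof (I2x S E dot Hmod e f s He Hf H1 H2) as Hx.
      change (mul s (meet e f) = s). rewrite <- Hx at 1. rewrite <- mulA, <- A. exact Hx.
  - intros meet Hi. pose proof (Hsim meet Hi) as Hs.
    destruct Hi as [_ [Hm HI]]. split; [|split].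
    + intros e f g He Hf Hg [A B]. destruct (Hs e f He Hf) as [C D].
      destruct (Hm e f He Hf) as [Em _].
      apply (prered S E dot Hmod); auto.
      * rewrite D at 2. rewrite <- mulA, <- A. exact D.
      * rewrite B at 2. rewrite <- mulA, <- C. exact B.
    + intros e f He Hf. pose proof (EE S E dot Hmod e f Hf) as Hd.
      destruct (Hm e f He Hf) as [E1 [a1 [b1 c1]]].
      destruct (Hm e (dot e f) He Hd) as [E2 [a2 [b2 c2]]].
      apply (prered S E dot Hmod); auto.
      * apply c2; auto. apply (lb1 S E dot Hmod); auto.
      * apply c1; auto. apply (lb2 S E dot Hmod e f); auto.
    + intros Hrr e f He Hf. destruct (Hs e f He Hf) as [C D].
      pose proof (EE S E dot Hmod e f Hf) as Hd.
      destruct (Hm e f He Hf) as [E1 [a1 [b1 c1]]].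
      pose proof (lb1 S E dot Hmod e f _ Hf a1 b1) as m1.
      pose proof (Hrr _ _ E1 He a1) as r1.
      pose proof (Hrr _ _ E1 Hd m1) as r2.
      rewrite C. rewrite <- mulA, <- r1. exact r2.
Qed.
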